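(* Let $\mathbb{F}\in\{\mathbb{R},\mathbb{C}\}$, $A\in\mathbb{F}^{m\times n}$, $b\in\mathbb{F}^m$ and $f:\mathbb{F}^n\to[0,\infty]$. A point $x'$ is a stationary point of $\mathcal{K}_{reg}(x)=\mathcal{Q}_2(f)(x)+\|Ax-b\|_2^2$ if and only if $$x'\in\operatorname*{argmin}_x\ \mathcal{Q}_2(f)(x)+\|x-z'\|_2^2,\qquad\text{where } z'=(I-A^*A)x'+A^*b.$$
   Context: $\mathcal{Q}_2(f)$ is the quadratic envelope of $f$: $\mathcal{Q}_2(f)(x)=\breve h(x)-\|x\|^2$, where $\breve h$ is the lower semicontinuous convex envelope of $h(x)=f(x)+\|x\|^2$. $A^*$ is the conjugate transpose, $\langle x,y\rangle=\sum_i x_i\overline{y_i}$, norms Euclidean. A stationary point of a function $g$ is a point $x$ with $0$ in the Fréchet subdifferential $\hat\partial g(x)$, i.e. the set of $v$ with $\liminf_{y\to x,y\ne x}(g(y)-g(x)-\mathrm{Re}\langle v,y-x\rangle)/\|y-x\|\ge0$. *)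

(* Defs.v *)
From HB Require Import structures.
From mathcomp Require Import all_boot all_order all_algebra.
From mathcomp Require Import all_classical all_reals ereal.
From mathcomp Require Import complex.
Set Implicit Arguments. Unset Strict Implicit. Unset Printing Implicit Defensive.
Import Order.TTheory GRing.Theory Num.Theory.
Local Open Scope ring_scope.
Local Open Scope classical_set_scope.

(* Scalar field F in {R, C}, presented over the real field R:
   emb : R -> F (inclusion of the reals), re : real part, cj : conjugation. *)
Record scalars (R : realType) := Scalars {
  sc_ty :> comNzRingType;
  sc_emb : R -> sc_ty;
  sc_re : sc_ty -> R;
  sc_cj : sc_ty -> sc_ty }.

Definition realS (R : realType) : scalars R :=
  @Scalars R R (fun t => t) (fun t => t) (fun t => t).

Definition complexS (R : realType) : scalars R :=
  @Scalars R R[i] (fun t => Complex t 0) (@complex.Re R) (@conjc R).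

Section Generic.
Variables (R : realType) (S : scalars R).
Local Notation F := (sc_ty S).
Local Notation emb := (@sc_emb R S).
Local Notation re := (@sc_re R S).
Local Notation cj := (@sc_cj R S).

Definition inner n (x y : 'cV[F]_n) : F := \sum_i x i 0 * cj (y i 0).
Definition nrm2 n (x : 'cV[F]_n) : R := re (inner x x).
Definition nrm n (x : 'cV[F]_n) : R := Num.sqrt (nrm2 x).

Definition adjmx m n (A : 'M[F]_(m, n)) : 'M[F]_(n, m) := map_mx cj A^T.

Definition lsc n (g : 'cV[F]_n -> \bar R) : Prop :=
  forall x (a : R), (a%:E < g x)%E ->
    exists2 d : R, 0 < d & forall y, nrm (y - x) < d -> (a%:E < g y)%E.

(* convexity (convex epigraph) of an extended-real function *)
Definition convexf n (g : 'cV[F]_n -> \bar R) : Prop :=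
  forall x y (t : R), 0 <= t <= 1 -> forall a b : R,
    (g x <= a%:E)%E -> (g y <= b%:E)%E ->
    (g (emb t *: x + emb (1 - t) *: y)%R <= (t * a + (1 - t) * b)%:E)%E.

Definition lsc_cvx_env n (h : 'cV[F]_n -> \bar R) (x : 'cV[F]_n) : \bar R :=
  ereal_sup [set g x | g in
     [set g : 'cV[F]_n -> \bar R | lsc g /\ convexf g /\ forall y, (g y <= h y)%E]].

Definition Q2 n (f : 'cV[F]_n -> \bar R) (x : 'cV[F]_n) : \bar R :=
  (lsc_cvx_env (fun y => f y + (nrm2 y)%:E) x - (nrm2 x)%:E)%E.

(* Frechet subdifferential (at points where g is finite):
   liminf_{y -> x, y <> x} (g y - g x - Re<v, y - x>) / ||y - x|| >= 0 *)
Definition frechet_subdiff n (g : 'cV[F]_n -> \bar R) (x v : 'cV[F]_n) : Prop :=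
  g x \is a fin_num /\
  forall eps : R, 0 < eps -> exists2 d : R, 0 < d & forall y, 0 < nrm (y - x) < d ->
    ((- (eps * nrm (y - x)))%:E <= g y - g x - (re (inner v (y - x)))%:E)%E.

Definition stationary n (g : 'cV[F]_n -> \bar R) (x : 'cV[F]_n) : Prop :=
  frechet_subdiff g x 0.

(* x is in argmin g (Rockafellar-Wets convention: empty if g == +oo) *)
Definition is_argmin n (g : 'cV[F]_n -> \bar R) (x : 'cV[F]_n) : Prop :=
  g x != +oo%E /\ forall y, (g x <= g y)%E.

Definition Kreg m n (A : 'M[F]_(m, n)) (b : 'cV[F]_m) (f : 'cV[F]_n -> \bar R)
  (x : 'cV[F]_n) : \bar R := (Q2 f x + (nrm2 (A *m x - b))%:E)%E.

Definition zprime m n (A : 'M[F]_(m, n)) (b : 'cV[F]_m) (x : 'cV[F]_n) : 'cV[F]_n :=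
  (1%:M - adjmx A *m A) *m x + adjmx A *m b.

Definition prop3p2_claim m n (A : 'M[F]_(m, n)) (b : 'cV[F]_m)
  (f : 'cV[F]_n -> \bar R) (x' : 'cV[F]_n) : Prop :=
  stationary (Kreg A b f) x' <->
  is_argmin (fun x => (Q2 f x + (nrm2 (x - zprime A b x'))%:E)%E) x'.
End Generic.

(* Main.v *)
Require Import Defs.
From HB Require Import structures.
From mathcomp Require Import all_boot all_order all_algebra.
From mathcomp Require Import all_classical all_reals ereal.
From mathcomp Require Import complex.
From mathcomp Require Import ring lra.
Set Implicit Arguments. Unset Strict Implicit. Unset Printing Implicit Defensive.
Import Order.TTheory GRing.Theory Num.Theory.
Local Open Scope ring_scope.

Record goodS (R : realType) (S : scalars R) : Prop := GoodS {
 g_reD : forall u v : S, sc_re (u + v) = sc_re u + sc_re v;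
 g_reM : forall t (u : S), sc_re (sc_emb S t * u) = t * sc_re u;
 g_cjD : forall u v : S, sc_cj (u + v) = sc_cj u + sc_cj v;
 g_cjM : forall u v : S, sc_cj (u * v) = sc_cj u * sc_cj v;
 g_cjK : forall u : S, sc_cj (sc_cj u) = u;
 g_cjemb : forall t, sc_cj (sc_emb S t) = sc_emb S t;
 g_resym : forall u v : S, sc_re (u * sc_cj v) = sc_re (v * sc_cj u);
 g_ge0 : forall u : S, 0 <= sc_re (u * sc_cj u);
 g_eq0 : forall u : S, sc_re (u * sc_cj u) = 0 -> u = 0;
 g_embB : forall s t, sc_emb S (s - t) = sc_emb S s - sc_emb S t;
 g_emb1 : sc_emb S 1 = 1 }.

Lemma good_real (R : realType) : goodS (realS R).
Proof.
split => //=.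
- by move=> u v; rewrite mulrC.
- by move=> u; rewrite -expr2 sqr_ge0.
- by move=> u /eqP; rewrite mulf_eq0 orbb => /eqP.
Qed.

Lemma good_complex (R : realType) : goodS (complexS R).
Proof.
split => /=.
- by move=> [a b] [c d].
- by move=> t [a b] /=; rewrite mul0r subr0.
- by move=> [a b] [c d] /=; rewrite /conjc /= opprD.
- by move=> [a b] [c d]; rewrite /conjc /=; congr Complex; ring.
- by move=> [a b]; rewrite /conjc opprK.
- by move=> t; rewrite /conjc oppr0.
- by move=> [a b] [c d] /=; ring.
- by move=> [a b] /=; nra.
- move=> [a b] /= h.
  have ha : a = 0 by nra.
  have hb : b = 0 by nra.
  by rewrite ha hb.
- by move=> s t; apply/eqP; rewrite eq_complex /= oppr0 addr0 !eqxx.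
- by [].
Qed.

Lemma idem0 (V : zmodType) (a : V) : a = a + a -> a = 0.
Proof. by move=> h; have := congr1 (fun z => z - a) h; rewrite subrr addrK. Qed.

Definition Pr (R : realType) (S : scalars R) n (x y : 'cV[S]_n) : R := sc_re (inner x y).

Lemma re0 (R : realType) (S : scalars R) (G : goodS S) : sc_re (0 : S) = 0.
Proof.
by apply: idem0; rewrite -g_reD // addr0.
Qed.

Lemma cj0 (R : realType) (S : scalars R) (G : goodS S) : sc_cj (0 : S) = 0.
Proof.
by apply: idem0; rewrite -g_cjD // addr0.
Qed.

Lemma re_sum (R : realType) (S : scalars R) (G : goodS S) n (F : 'I_n -> S) :
  sc_re (\sum_i F i) = \sum_i sc_re (F i).
Proof. exact: (big_morph _ (g_reD G) (re0 G)). Qed.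

Lemma cj_sum (R : realType) (S : scalars R) (G : goodS S) n (F : 'I_n -> S) :
  sc_cj (\sum_i F i) = \sum_i sc_cj (F i).
Proof. exact: (big_morph _ (g_cjD G) (cj0 G)). Qed.

Lemma PDl (R : realType) (S : scalars R) (G : goodS S) n (x y z : 'cV[S]_n) :
  Pr (x + y) z = Pr x z + Pr y z.
Proof.
rewrite /Pr /inner -g_reD //; congr sc_re.
by rewrite -big_split /=; apply: eq_bigr => i _; rewrite !mxE mulrDl.
Qed.

Lemma Psym (R : realType) (S : scalars R) (G : goodS S) n (x y : 'cV[S]_n) :
  Pr x y = Pr y x.
Proof.
rewrite /Pr /inner !re_sum //; apply: eq_bigr => i _; exact: g_resym.
Qed.

Lemma PDr (R : realType) (S : scalars R) (G : goodS S) n (x y z : 'cV[S]_n) :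
  Pr z (x + y) = Pr z x + Pr z y.
Proof. by rewrite !(Psym G z) PDl. Qed.

Lemma PZl (R : realType) (S : scalars R) (G : goodS S) n t (x y : 'cV[S]_n) :
  Pr (sc_emb S t *: x) y = t * Pr x y.
Proof.
rewrite /Pr /inner !re_sum // mulr_sumr; apply: eq_bigr => i _.
by rewrite !mxE -mulrA g_reM.
Qed.

Lemma PZr (R : realType) (S : scalars R) (G : goodS S) n t (x y : 'cV[S]_n) :
  Pr y (sc_emb S t *: x) = t * Pr y x.
Proof. by rewrite !(Psym G y) PZl. Qed.

Lemma P0l (R : realType) (S : scalars R) (G : goodS S) n (y : 'cV[S]_n) :
  Pr 0 y = 0.
Proof.
by apply: idem0; rewrite -PDl // addr0.
Qed.

Lemma PNl (R : realType) (S : scalars R) (G : goodS S) n (x y : 'cV[S]_n) :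
  Pr (- x) y = - Pr x y.
Proof.
apply/eqP; rewrite -subr_eq0 opprK -PDl // addNr P0l //.
Qed.

Lemma PNr (R : realType) (S : scalars R) (G : goodS S) n (x y : 'cV[S]_n) :
  Pr y (- x) = - Pr y x.
Proof. by rewrite !(Psym G y) PNl. Qed.

Lemma Padj (R : realType) (S : scalars R) (G : goodS S) m n
  (A : 'M[S]_(m, n)) (x : 'cV[S]_n) (w : 'cV[S]_m) :
  Pr (A *m x) w = Pr x (adjmx A *m w).
Proof.
rewrite /Pr /inner; congr sc_re.
under eq_bigr => i _ do rewrite !mxE mulr_suml.
rewrite exchange_big /=; apply: eq_bigr => j _.
rewrite !mxE cj_sum // mulr_sumr; apply: eq_bigr => i _.
by rewrite !mxE g_cjM // g_cjK // mulrCA mulrA.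
Qed.

Lemma nrm2E (R : realType) (S : scalars R) n (x : 'cV[S]_n) : nrm2 x = Pr x x.
Proof. by []. Qed.

Lemma nrm2_ge0 (R : realType) (S : scalars R) (G : goodS S) n (x : 'cV[S]_n) :
  0 <= nrm2 x.
Proof. rewrite /nrm2 /inner re_sum //; apply: sumr_ge0 => i _; exact: g_ge0. Qed.

Lemma nrm2_eq0 (R : realType) (S : scalars R) (G : goodS S) n (x : 'cV[S]_n) :
  nrm2 x = 0 -> x = 0.
Proof.
rewrite /nrm2 /inner re_sum // => /eqP; rewrite psumr_eq0; last by move=> i _; exact: g_ge0.
move=> /allP h; apply/matrixP => i j; rewrite (ord1 j) mxE; apply: (g_eq0 G).
by apply/eqP; apply: h; rewrite mem_index_enum.
Qed.

Lemma nrm2D (R : realType) (S : scalars R) (G : goodS S) n (x y : 'cV[S]_n) :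
  nrm2 (x + y) = nrm2 x + nrm2 y + 2 * Pr x y.
Proof.
rewrite !nrm2E !PDl // !PDr // (Psym G y x); ring.
Qed.

Lemma nrm2Z (R : realType) (S : scalars R) (G : goodS S) n t (x : 'cV[S]_n) :
  nrm2 (sc_emb S t *: x) = t ^+ 2 * nrm2 x.
Proof. by rewrite !nrm2E PZl // PZr // mulrA expr2. Qed.

Local Open Scope classical_set_scope.

Lemma phi_ge0 (R : realType) (S : scalars R) n (h : 'cV[S]_n -> \bar R)
  (h0 : forall y, (0 <= h y)%E) x : (0 <= lsc_cvx_env h x)%E.
Proof.
apply: ereal_sup_ubound; exists (fun _ => 0%E) => //; split; last split.
- by move=> y a ha; exists 1 => // z _.
- move=> y z t /andP[t0 t1] a b ha hb; rewrite lee_fin.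
  rewrite lee_fin in ha hb.
  by apply: addr_ge0; apply: mulr_ge0 => //; rewrite subr_ge0.
- exact: h0.
Qed.

Lemma phi_cvx (R : realType) (S : scalars R) n (h : 'cV[S]_n -> \bar R) :
  convexf (lsc_cvx_env h).
Proof.
move=> x y t ht a b hx hy.
apply: ge_ereal_sup => _ [g [lg [cg hg]] <-].
apply: (cg) => //.
- by apply: (le_trans _ hx); apply: ereal_sup_ubound; exists g => //.
- by apply: (le_trans _ hy); apply: ereal_sup_ubound; exists g => //.
Qed.

Lemma ge0_cases (R : realType) (e : \bar R) : (0 <= e)%E ->
  e = +oo%E \/ exists2 r, e = r%:E & 0 <= r.
Proof. by case: e => [r| |] //=; [rewrite lee_fin; right; exists r | left]. Qed.

Lemma xz_adj (R : realType) (S : scalars R) m n (A : 'M[S]_(m, n)) b x :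
  x - zprime A b x = adjmx A *m (A *m x - b).
Proof.
rewrite /zprime mulmxBl mul1mx mulmxBr mulmxA.
by rewrite opprD opprB addrA (addrC x) subrK.
Qed.

Lemma keyD (R : realType) (S : scalars R) (G : goodS S) m n (A : 'M[S]_(m, n)) b x y :
  let z := zprime A b x in
  nrm2 (A *m y - b) - nrm2 (y - z) - (nrm2 (A *m x - b) - nrm2 (x - z)) =
  nrm2 (A *m (y - x)) - nrm2 (y - x).
Proof.
move=> z.
have e1 : A *m y - b = (A *m x - b) + A *m (y - x).
  by rewrite mulmxBr [RHS]addrC [RHS]addrA subrK.
have e2 : y - z = (x - z) + (y - x) by rewrite [RHS]addrC [RHS]addrA subrK.
rewrite e1 e2.
have hw : x - z = adjmx A *m (A *m x - b) by rewrite /z xz_adj.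
move: (A *m x - b) (x - z) (y - x) hw => u w d hw.
rewrite (nrm2D G u) (nrm2D G w) (Psym G u) Padj // -hw (Psym G w).
ring.
Qed.

Lemma keyI2 (R : realType) (S : scalars R) (G : goodS S) n (y z : 'cV[S]_n) :
  nrm2 (y - z) - nrm2 y = nrm2 z - 2 * Pr y z.
Proof.
rewrite nrm2D // PNr // (nrm2E (- z)) PNl // PNr // opprK -nrm2E; ring.
Qed.

Lemma comb_sub (R : realType) (S : scalars R) (G : goodS S) n t (y x : 'cV[S]_n) :
  sc_emb S t *: y + sc_emb S (1 - t) *: x - x = sc_emb S t *: (y - x).
Proof.
rewrite g_embB // g_emb1 // scalerBl scale1r scalerBr.
move: (sc_emb S t *: y) (sc_emb S t *: x) => p q; by rewrite addrCA addrAC subrr add0r.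
Qed.

Lemma comb_P (R : realType) (S : scalars R) (G : goodS S) n t (y x z : 'cV[S]_n) :
  Pr (sc_emb S t *: y + sc_emb S (1 - t) *: x) z = t * Pr y z + (1 - t) * Pr x z.
Proof. by rewrite PDl // !PZl. Qed.

Lemma nrmZ (R : realType) (S : scalars R) (G : goodS S) n t (x : 'cV[S]_n) :
  0 <= t -> nrm (sc_emb S t *: x) = t * nrm x.
Proof.
move=> t0; rewrite /nrm nrm2Z // sqrtrM ?sqr_ge0 // sqrtr_sqr ger0_norm //.
Qed.

Lemma main_gen (R : realType) (S : scalars R) (G : goodS S) m n
  (A : 'M[S]_(m, n)) (b : 'cV[S]_m) (f : 'cV[S]_n -> \bar R)
  (f0 : forall x, (0 <= f x)%E) (x' : 'cV[S]_n) : prop3p2_claim A b f x'.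
Proof.
set h := fun y => (f y + (nrm2 y)%:E)%E.
have h0 : forall y, (0 <= h y)%E by move=> y; rewrite /h adde_ge0 // lee_fin nrm2_ge0.
have phi0 := phi_ge0 h0.
have phic := @phi_cvx _ _ _ h.
rewrite /prop3p2_claim /stationary /frechet_subdiff /is_argmin /Kreg /Q2 -/h.
set phi := lsc_cvx_env h.
rewrite -/phi in phi0 phic.
set z := zprime A b x'.
have [hpinf | [p hp p0]] := ge0_cases (phi0 x').
  rewrite hpinf /=; split; by case.
split.
- move=> [Kfin Hst]; split; first by rewrite hp.
  move=> y; have [hy|[r hr r0]] := ge0_cases (phi0 y).
    by rewrite hy /= leey.
  rewrite hp hr /= lee_fin.
  rewrite leNgt; apply/negP => hlt.
  have i2y := keyI2 G y z; have i2x := keyI2 G x' z.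
  have [d0|dn0] := eqVneq (y - x') 0.
    have eyx : y = x' by apply/eqP; rewrite -subr_eq0 d0.
    subst y; have erp : r = p by move: hr; rewrite hp => -[].
    subst r; by rewrite ltxx in hlt.
  set d := y - x' in dn0.
  have N0 : 0 < nrm d.
    rewrite /nrm sqrtr_gt0 lt_neqAle nrm2_ge0 // andbT eq_sym.
    by apply/eqP => /(nrm2_eq0 G); apply/eqP.
  set N := nrm d in N0.
  set a := nrm2 (A *m d).
  have a0 : 0 <= a by exact: nrm2_ge0.
  set dl := (p - nrm2 x' + nrm2 (x' - z)) - (r - nrm2 y + nrm2 (y - z)).
  have dl0 : 0 < dl by rewrite /dl subr_gt0.
  have eps0 : 0 < dl / (4 * N) by rewrite divr_gt0 // mulr_gt0.
  have [dd dd0 Hb] := Hst _ eps0.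
  set t := Num.min 1 (Num.min (dd / (2 * N)) (dl / (4 * (a + 1)))).
  have t0 : 0 < t.
    rewrite /t !lt_min ltr01 !divr_gt0 // ?mulr_gt0 //.
    by rewrite ltr_wpDl.
  have t1 : t <= 1 by rewrite /t ge_min lexx.
  have t2 : t <= dd / (2 * N) by rewrite /t !ge_min lexx orbT.
  have t3 : t <= dl / (4 * (a + 1)) by rewrite /t !ge_min lexx !orbT.
  have t01 : 0 <= t <= 1 by rewrite t1 ltW.
  set yt := sc_emb S t *: y + sc_emb S (1 - t) *: x'.
  have cv := phic y x' t t01 r p (ltac:(by rewrite hr)) (ltac:(by rewrite hp)).
  rewrite -/yt in cv.
  have [hyt|[rt hrt rt0]] := ge0_cases (phi0 yt).
    by rewrite hyt leye_eq in cv.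
  rewrite hrt lee_fin in cv.
  have ed : yt - x' = sc_emb S t *: d by exact: comb_sub.
  have Nt : nrm (yt - x') = t * N by rewrite ed nrmZ // ltW.
  have hc : 0 < nrm (yt - x') < dd.
    rewrite Nt mulr_gt0 //=.
    have h1 : t * N <= dd / (2 * N) * N by rewrite ler_wpM2r // ltW.
    have h2 : dd / (2 * N) * N = dd / 2 by field; rewrite gt_eqF.
    lra.
  have := Hb yt hc.
  have -> : sc_re (inner 0 (yt - x')) = 0 by exact: (P0l G).
  rewrite hrt hp Nt /= lee_fin => Hk.
  have kt := keyD G A b x' yt; rewrite /= -/z ed -scalemxAr !nrm2Z // -/a !expr2 in kt.
  have i2t := keyI2 G yt z; rewrite comb_P // in i2t.
  have hdt : t * dl = t * (p - r - 2 * Pr x' z + 2 * Pr y z).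
    by congr (_ * _); rewrite /dl; lra.
  have heps : dl / (4 * N) * (t * N) = t * dl / 4.
    by field; rewrite gt_eqF.
  have ht4 : t * (a + 1) <= dl / 4.
    have : t * (a + 1) <= dl / (4 * (a + 1)) * (a + 1) by rewrite ler_wpM2r // addr_ge0.
    suff -> : dl / (4 * (a + 1)) * (a + 1) = dl / 4 by [].
    by field; rewrite gt_eqF // ltr_wpDl.
  have hta : t * a <= dl / 4 by lra.
  have h2 : t * (t * a) <= t * (dl / 4) by rewrite ler_wpM2l // ltW.
  have hd2 : 0 <= t * t * nrm2 d by rewrite mulr_ge0 ?mulr_ge0 ?nrm2_ge0 // ltW.
  have tdl : 0 < t * dl by rewrite mulr_gt0.
  rewrite -/d in kt.
  have : t * dl <= 0 by lra.
  by rewrite leNgt tdl.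
- move=> [Gfin Gmin]; split; first by rewrite hp.
  move=> eps eps0; exists eps => // y /andP[_ hy].
  have [hyi|[r hr r0]] := ge0_cases (phi0 y).
    by rewrite hyi hp /= leey.
  have := Gmin y; rewrite hp hr /= !lee_fin => hg.
  have -> : sc_re (inner 0 (y - x')) = 0 by exact: (P0l G).
  have k := keyD G A b x' y; rewrite /= -/z in k.
  have ha := nrm2_ge0 G (A *m (y - x')).
  have hN : 0 <= nrm (y - x') by exact: sqrtr_ge0.
  have hn : nrm2 (y - x') <= eps * nrm (y - x').
    rewrite -[nrm2 (y - x')]sqr_sqrtr ?nrm2_ge0 // -/(nrm _) expr2.
    by apply: ler_wpM2r => //; apply: ltW.
  lra.
Qed.

Local Close Scope classical_set_scope.

Theorem proposition3p2 (R : realType) :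
  (forall (m n : nat) (A : 'M[realS R]_(m, n)) (b : 'cV[realS R]_m)
     (f : 'cV[realS R]_n -> \bar R),
     (forall x, (0 <= f x)%E) ->
     forall x' : 'cV[realS R]_n, prop3p2_claim A b f x') /\
  (forall (m n : nat) (A : 'M[complexS R]_(m, n)) (b : 'cV[complexS R]_m)
     (f : 'cV[complexS R]_n -> \bar R),
     (forall x, (0 <= f x)%E) ->
     forall x' : 'cV[complexS R]_n, prop3p2_claim A b f x').
Proof.
split => m n A b f f0 x'.
- exact: (main_gen (good_real R)).
- exact: (main_gen (good_complex R)).
Qed.
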